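(* Let $X$ and $a$ be variables, let $C_k=\frac1{k+1}\binom{2k}{k}$ denote the Catalan numbers, and let $U_n(x)$ be the Chebyshev polynomials of the second kind, defined by $\sum_{n\ge0}U_n(x)z^n=\frac1{1-2xz+z^2}$, with $U_{-1}(x)=0$. Then for all positive integers $n$, $$\det_{0\le i,j\le n-1}\left(X(-2a)^{i+j}+\sum_{k=0}^{\lfloor(i+j-1)/2\rfloor}(-2a)^{i+j-2k-1}C_k\right)=(-1)^{n-1}\big(XU_{n-1}(-a)+U_{n-2}(-a)\big).$$
   Context: An empty sum (when $\lfloor(i+j-1)/2\rfloor<0$) equals $0$. *)

(* Defs.v *)
From mathcomp Require Import all_boot all_order all_algebra.
Set Implicit Arguments. Unset Strict Implicit. Unset Printing Implicit Defensive.
Import GRing.Theory.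
Local Open Scope ring_scope.

(* Catalan numbers C_k = binom(2k,k)/(k+1) (an exact division in nat). *)
Definition catalan (k : nat) : nat := ('C(2 * k, k) %/ k.+1)%N.

(* chebV x m = U_{m-1}(x):  U_{-1} = 0, U_0 = 1, U_{m+1} = 2x U_m - U_{m-1};
   this recurrence is exactly the coefficient identity of
   (1 - 2xz + z^2) * sum_n U_n(x) z^n = 1. *)
Fixpoint chebV (R : comRingType) (x : R) (m : nat) : R :=
  match m with
  | 0%N => 0
  | 1%N => 1
  | (m'.+1 as m1).+1 => 2%:R * x * chebV x m1 - chebV x m'
  end.

(* Chebyshev polynomial of the second kind U_m(x), for integer m >= -1
   (value 0 for m < -1, never used). *)
Definition chebU (R : comRingType) (x : R) (m : int) : R :=
  match m with
  | Posz k => chebV x k.+1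
  | Negz _ => 0
  end.

(* Main.v *)
Require Import Defs.
From mathcomp Require Import all_boot all_order all_algebra zify ring.
Import GRing.Theory.
Local Open Scope ring_scope.

Fixpoint ballot (k j : nat) : nat :=
  if k is k'.+1 then ((if j is j'.+1 then ballot k' j' else 0) + ballot k' j.+1)%N
  else (j == 0)%N.

Lemma ballot_lt k j : (k < j)%N -> ballot k j = 0%N.
Proof.
elim: k j => [|k IH] [|j] //= H.
by rewrite !IH //; lia.
Qed.

Lemma ballot_diag k : ballot k k = 1%N.
Proof. by elim: k => //= k ->; rewrite ballot_lt. Qed.

Lemma ballot_odd k j : odd (k + j) -> ballot k j = 0%N.
Proof.
elim: k j => [|k IH] [|j] //= H; rewrite ?add0n !IH //;
  move: H; rewrite ?(addSn, addnS, addn0) /= ?negbK //.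
Qed.

Lemma ballot_bin k j u : (k + j = u + u)%N ->
  (ballot k j + 'C(k, u.+1) = 'C(k, u))%N.
Proof.
elim: k j u => [|k IH] j u H.
  rewrite /= bin0n; case: u H => [|u] /= H; first by have ->: j = 0%N by lia.
  by have -> : (j == 0%N) = false by apply/eqP; lia.
case: u H => [|u] H; first by lia.
case: j H => [|j] H /=.
- have H1 := IH 1%N u.+1 ltac:(lia).
  rewrite !binS ?addn0.
  have -> : 'C(k, u) = 'C(k, u.+1).
    by rewrite -bin_sub; [congr 'C(_,_); lia | lia].
  lia.
- have H1 := IH j u ltac:(lia).
  have H2 := IH j.+2 u.+1 ltac:(lia).
  rewrite !binS; lia.
Qed.

Lemma ballot_cat m : ballot (m + m) 0 = catalan m.
Proof.
have H := ballot_bin (m + m) 0 m ltac:(lia).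
have H2 := mul_bin_left (m + m) m.
rewrite /catalan mul2n -addnn.
have E : 'C(m + m, m) = (m.+1 * ballot (m + m) 0)%N.
  rewrite (_ : (m + m - m = m)%N) in H2; last by lia.
  rewrite -H in H2 *; nia.
by rewrite E mulKn.
Qed.

Fixpoint pc (R : comRingType) (j : nat) : nat -> R :=
  match j with
  | 0%N => fun k => (k == 0%N)%:R
  | 1%N => fun k => (k == 1%N)%:R
  | (j'.+1 as j1).+1 => fun k => (if k is k'.+1 then pc R j1 k' else 0) - pc R j' k
  end.
Arguments pc {R}.

Lemma pc_ind (P : nat -> Prop) : P 0%N -> P 1%N ->
  (forall j, P j -> P j.+1 -> P j.+2) -> forall j, P j.
Proof.
move=> H0 H1 HS j; suff: P j /\ P j.+1 by case.
by elim: j => [|j [IH1 IH2]]; split => //; apply: HS.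
Qed.

Lemma pcSS (R : comRingType) j k : pc j.+2 k.+1 = pc j.+1 k - pc j k.+1 :> R.
Proof. by []. Qed.
Lemma pcS0 (R : comRingType) j : pc j.+2 0 = - pc j 0 :> R.
Proof. by rewrite /= sub0r. Qed.

Lemma pcE (R : comRingType) j l : pc j.+2 l = (if l is l'.+1 then pc j.+1 l' else 0) - pc j l :> R.
Proof. by case: l. Qed.

Lemma pc_gt (R : comRingType) j k : (j < k)%N -> pc j k = 0 :> R.
Proof.
elim/pc_ind: j k => [|| j IH1 IH2] k H.
- by case: k H.
- by case: k H => [|[|k]].
- case: k H => [|k] H //.
  by rewrite pcSS IH2 ?IH1 ?subr0 //; lia.
Qed.

Lemma pc_diag (R : comRingType) j : pc j j = 1 :> R.
Proof.
elim/pc_ind: j => [|| j IH1 IH2] //.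
by rewrite pcSS IH2 pc_gt ?subr0.
Qed.

Lemma sum_ext (R : comRingType) (F : nat -> R) K M : (K <= M)%N ->
  (forall l, (K <= l)%N -> F l = 0) -> \sum_(l < M) F l = \sum_(l < K) F l.
Proof.
move=> HK HF; rewrite -(subnKC HK) big_split_ord /= [X in _ + X = _]big1 ?addr0 // => i _.
by apply: HF; rewrite leq_addr.
Qed.

Definition ff (R : comRingType) j k : R := (ballot k j)%:R.
Arguments ff {R}.

Lemma g_f (R : comRingType) j k :
  \sum_(l < j.+1) pc j l * ff 0 (l + k) = ff j k :> R.
Proof.
elim/pc_ind: j k => [|| j IH1 IH2] k.
- by rewrite big_ord1 /= mul1r.
- by rewrite !big_ord_recl big_ord0 /= mul0r mul1r add0r addr0 /ff /= add0n.
- under eq_bigr => i _ do rewrite pcE mulrBl.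
  rewrite sumrB big_ord_recl /= mul0r add0r.
  have -> : \sum_(i < j.+2) pc j.+1 i * ff 0 ((lift ord0 i) + k) = ff j.+1 k.+1 :> R.
    by rewrite -IH2; apply: eq_bigr => i _; rewrite /= /bump /= add1n addSnnS.
  rewrite (@sum_ext _ (fun l => pc j l * ff 0 (l + k)) j.+1); try (by lia);
    try (by move=> l Hl; rewrite pc_gt ?mul0r).
  by rewrite /= IH1 /ff /= natrD addrC addKr.
Qed.

Lemma pc_orth (R : comRingType) N i j : (i < N)%N -> (j < N)%N ->
  \sum_(k < N) pc j k * ff i k = (i == j)%:R :> R.
Proof.
move=> HiN HjN.
case: (leqP j i) => Hji.
- rewrite (@sum_ext _ (fun k => pc j k * ff i k) j.+1); try (by lia);
    try (by move=> l Hl; rewrite pc_gt ?mul0r).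
  rewrite /= big_ord_recr /= big1 ?add0r; last first.
    by move=> k _; rewrite /ff ballot_lt ?mulr0 //; have := ltn_ord k; lia.
  rewrite pc_diag mul1r /ff.
  case: (eqVneq i j) => [->|ne]; first by rewrite ballot_diag.
  by rewrite ballot_lt //; move/eqP: ne; lia.
- have -> : (i == j) = false by apply/eqP; lia.
  under eq_bigr => k _ do rewrite -g_f mulr_sumr.
  rewrite exchange_big big1 //= => l _.
  transitivity (pc i l * \sum_(k < N) pc j k * ff 0 (k + l) : R).
    by rewrite mulr_sumr; apply: eq_bigr => k _; rewrite mulrCA addnC.
  rewrite (@sum_ext _ (fun k => pc j k * ff 0 (k + l)) j.+1); try (by lia);
    try (by move=> k Hk; rewrite pc_gt ?mul0r).
  by rewrite /= g_f /ff ballot_lt ?mulr0 //; have := ltn_ord l; lia.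
Qed.

Definition hh (R : comRingType) (X b : R) (m : nat) : R :=
  X * b ^+ m + \sum_(k < m.+1./2) b ^+ (m - 2 * k - 1) * (catalan k)%:R.
Arguments hh {R}.

Lemma hh_step (R : comRingType) (X b : R) m :
  hh X b m.+1 - b * hh X b m = ff 0 m.
Proof.
rewrite /hh /ff.
have -> : X * b ^+ m.+1 + \sum_(k < m.+2./2) b ^+ (m.+1 - 2 * k - 1) * (catalan k)%:R
   - b * (X * b ^+ m + \sum_(k < m.+1./2) b ^+ (m - 2 * k - 1) * (catalan k)%:R)
   = \sum_(k < m.+2./2) b ^+ (m.+1 - 2 * k - 1) * (catalan k)%:R
   - \sum_(k < m.+1./2) b * (b ^+ (m - 2 * k - 1) * (catalan k)%:R).
  by rewrite -mulr_sumr exprS; ring.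
have [r [Hr|Hr]] : exists r, m = (r + r)%N \/ m = (r + r).+1.
  exists m./2; case: (boolP (odd m)) => Ho.
    by right; rewrite -[LHS](odd_double_half m) Ho addnn.
  by left; rewrite -[LHS](odd_double_half m) (negbTE Ho) addnn.
  have E1 : (m.+2./2 = r.+1)%N by rewrite Hr addnn /= ?doubleK ?uphalf_double.
  have E2 : (m.+1./2 = r)%N by rewrite Hr addnn /= ?doubleK ?uphalf_double.
  rewrite E1 E2 big_ord_recr /= addrAC.
  rewrite (_ : m.+1 - 2 * r - 1 = 0)%N; last by lia.
  rewrite expr0 mul1r.
  rewrite [X in X - _ + _](_ : _ = \sum_(k < r) b * (b ^+ (m - 2 * k - 1) * (catalan k)%:R)).
    by rewrite subrr add0r Hr ballot_cat.
  apply: eq_bigr => k _; rewrite mulrA -exprS; congr (_ ^+ _ * _).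
  have := ltn_ord k; lia.
- have E1 : (m.+2./2 = r.+1)%N by rewrite Hr addnn /= ?doubleK ?uphalf_double.
  have E2 : (m.+1./2 = r.+1)%N by rewrite Hr addnn /= ?doubleK ?uphalf_double.
  rewrite E1 E2 ballot_odd; last by rewrite Hr addn0 /= addnn odd_double.
  rewrite -sumrB big1 // => k _.
  rewrite mulrA -exprS (_ : (m - 2 * k - 1).+1 = m.+1 - 2 * k - 1)%N ?subrr //.
  have := ltn_ord k; lia.
Qed.

Lemma chebVSS (R : comRingType) (x : R) m :
  chebV x m.+2 = 2%:R * x * chebV x m.+1 - chebV x m.
Proof. by case: m. Qed.

Lemma alpha_val (R : comRingType) (X a : R) j :
  \sum_(l < j.+1) pc j l * hh X (- (2%:R * a)) l
  = X * chebV (- a) j.+1 + chebV (- a) j.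
Proof.
set b := - (2%:R * a).
elim/pc_ind: j => [|| j IH1 IH2].
- by rewrite big_ord1 /= /hh big_ord0 !mul1r expr0 mulr1 !addr0.
- rewrite !big_ord_recl big_ord0 /= /hh /= !big_ord1 /= mul0r add0r mul1r addr0.
  rewrite /bump /= expr1 expr0 mul1r mulr1 subr0 /b. rewrite (_ : catalan 0 = 1%N) //; ring.
- rewrite (@chebVSS _ (-a) j.+1) (@chebVSS _ (-a) j).
  move: IH1 IH2; set c2 := chebV _ j.+2; set c1 := chebV _ j.+1; set c0 := chebV _ j.
  move=> IH1 IH2.
  under eq_bigr => i _ do rewrite pcE mulrBl.
  rewrite sumrB big_ord_recl /= mul0r add0r.
  have -> : \sum_(i < j.+2) pc j.+1 i * hh X b (lift ord0 i)
      = b * \sum_(i < j.+2) pc j.+1 i * hh X b i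
        + \sum_(i < j.+2) pc j.+1 i * ff 0 (i + 0).
    rewrite mulr_sumr -big_split /=; apply: eq_bigr => i _.
    rewrite addn0 /= /bump /= add1n.
    have := @hh_step _ X b i; rewrite -/b => <-; ring.
  rewrite IH2 g_f /ff ballot_lt // addr0.
  have E : \sum_(i < j.+3) pc j i * hh X b i = \sum_(i < j.+1) pc j i * hh X b i.
    apply: (@sum_ext _ (fun k => pc j k * hh X b k) j.+1); try (by lia).
    by move=> k Hk; rewrite pc_gt ?mul0r.
  rewrite E IH1 /b.
  have Ec2 : c2 = 2%:R * -a * c1 - c0 by rewrite /c2 chebVSS.
  rewrite Ec2; clearbody c2 c1 c0 b; ring.
Qed.

Definition qq (R : comRingType) (b : R) (i k : nat) : R :=
  if i is i'.+1 then (if k is k'.+1 then pc i' k' else 0) - b * pc i' k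
  else (k == 0%N)%:R.
Arguments qq {R}.

Lemma qq_gt (R : comRingType) (b : R) i k : (i < k)%N -> qq b i k = 0.
Proof.
case: i => [|i] /=; first by case: k.
case: k => [|k] // H; rewrite !pc_gt ?mulr0 ?subr0 //; lia.
Qed.

Lemma qq_diag (R : comRingType) (b : R) i : qq b i i = 1.
Proof. by case: i => [|i] //=; rewrite pc_diag pc_gt ?mulr0 ?subr0. Qed.

Lemma row_comp (R : comRingType) (X b : R) N i k : (i < N)%N ->
  \sum_(l < N) qq b i l * hh X b (l + k)
  = if i is i'.+1 then ff i' k else hh X b k.
Proof.
case: N => [|N] // HiN.
case: i HiN => [|i] HiN.
  rewrite big_ord_recl /= mul1r add0n big1 ?addr0 // => l _.
  by rewrite mul0r.
under eq_bigr => l _ do rewrite /= mulrBl.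
rewrite sumrB big_ord_recl /= mul0r add0r.
have E : \sum_(l < N.+1) b * pc i l * hh X b (l + k)
       = \sum_(l < N) b * pc i l * hh X b (l + k).
  apply: (@sum_ext _ (fun l => b * pc i l * hh X b (l + k)) N); try (by lia).
  by move=> l Hl; rewrite pc_gt ?mulr0 ?mul0r //; lia.
rewrite E -sumrB.
have E2 : \sum_(l < N) ff 0 (l + k) * pc i l = \sum_(l < i.+1) pc i l * ff 0 (l + k) :> R.
  rewrite (@sum_ext _ (fun l => ff 0 (l + k) * pc i l) i.+1); try (by lia).
    by apply: eq_bigr => l _; rewrite mulrC.
  by move=> l Hl; rewrite pc_gt ?mulr0.
rewrite g_f in E2; rewrite -E2; apply: eq_bigr => l _.
rewrite /bump /= add1n addSn -(@hh_step _ X b (l + k)); ring.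
Qed.

Lemma det_M' (R : comRingType) (m : nat) (F : nat -> R) :
  \det (\matrix_(i < m.+1, j < m.+1) (if (i : nat) is i'.+1 then (i' == j)%:R else F j))
  = (-1) ^+ m * F m.
Proof.
rewrite (expand_det_col _ ord_max) big_ord_recl /= big1 ?addr0; last first.
  move=> i _; rewrite !mxE lift0 /=.
  have -> : (i == m :> nat) = false by apply/eqP; have := ltn_ord i; lia.
  by rewrite mul0r.
rewrite mxE /= /cofactor /= add0n.
have -> : row' ord0 (col' ord_max (\matrix_(i < m.+1, j < m.+1)
     (if (i : nat) is i'.+1 then (i' == j)%:R else F j))) = 1%:M.
  apply/matrixP => i j; rewrite !mxE lift0 /= /bump.
  by rewrite leqNgt (ltn_ord j) add0n.
by rewrite det1 mulr1 mulrC.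
Qed.

Theorem theorem14 (R : comRingType) (X a : R) (n : nat) (hn : (0 < n)%N) :
  \det (\matrix_(i < n, j < n)
          (X * (- (2%:R * a)) ^+ (i + j)
           + \sum_(k < (i + j).+1./2)
               (- (2%:R * a)) ^+ (i + j - 2 * k - 1) * (catalan k)%:R))
  = (-1) ^+ n.-1 * (X * chebU (- a) (n%:Z - 1) + chebU (- a) (n%:Z - 2)).
Proof.
case: n hn => // m _.
set b := - (2%:R * a).
change (\det (\matrix_(i < m.+1, j < m.+1) hh X b (i + j)) = (-1) ^+ m *
   (X * chebU (- a) (m.+1%:Z - 1) + chebU (- a) (m.+1%:Z - 2))).
set H := \matrix_(i < m.+1, j < m.+1) hh X b (i + j).
set A := \matrix_(i < m.+1, k < m.+1) qq b i k.
set Bm := \matrix_(j < m.+1, l < m.+1) (pc j l : R).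
have dA : \det A = 1.
  rewrite det_trig; last by apply/is_trig_mxP => i j Hij; rewrite mxE qq_gt.
  by rewrite big1 // => i _; rewrite mxE qq_diag.
have dB : \det Bm = 1.
  rewrite det_trig; last by apply/is_trig_mxP => i j Hij; rewrite mxE pc_gt.
  by rewrite big1 // => i _; rewrite mxE pc_diag.
have HM : A *m H *m Bm^T = \matrix_(i < m.+1, j < m.+1)
   (if (i : nat) is i'.+1 then (i' == j)%:R else X * chebV (- a) j.+1 + chebV (- a) j).
  apply/matrixP => i j.
  have E : forall k, (A *m H) i k = if (i:nat) is i'.+1 then ff i' k else hh X b k.
    move=> k; rewrite mxE -(@row_comp _ X b _ _ k (ltn_ord i)).
    by apply: eq_bigr => l _; rewrite !mxE.
  rewrite !mxE.
  under eq_bigr => k _ do rewrite E !mxE.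
  clear E; case: i => [[|i] Hi] /=.
  - rewrite -alpha_val -/b.
    rewrite (@sum_ext _ (fun k => hh X b k * pc j k) j.+1) //=.
    + by apply: eq_bigr => k _; rewrite mulrC.
    + by move=> l Hl; rewrite pc_gt ?mulr0.
  - under eq_bigr => k _ do rewrite mulrC.
    by apply: pc_orth; [lia | exact: ltn_ord j].
have : \det (A *m H *m Bm^T) = \det H.
  by rewrite !det_mulmx det_tr dA dB mul1r mulr1.
rewrite HM (@det_M' _ m (fun j => X * chebV (- a) j.+1 + chebV (- a) j)) => <-.
have -> : (m.+1%:Z - 1 = m%:Z)%R by rewrite -addn1 PoszD addrK.
congr (_ * (_ + _)).
case: m {H A Bm dA dB HM} => [|m] //.
by have -> : (m.+2%:Z - 2 = m%:Z)%R by rewrite -addn2 PoszD addrK.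
Qed.
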